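(* For any $i\le r-2$ the divisor $X_i$ restricted to the $L$-resolution is equal to the divisor $X^L_j$, where $j=(i \bmod (r-a))$, and the divisor $X_i$ restricted to the $R$-resolution is equal to the divisor $X^R_j$, where $j=(i \bmod a)$.
   Context: Let $0<a<r$ be coprime integers, $b$ the inverse of $a$ modulo $r$, and for integers $s,t$ let $(s \bmod t)$ denote the least non-negative integer $u$ with $t\mid s-u$. Let $N=\mathbb{Z}^3+\mathbb{Z}\frac1r(1,a,r-a)$, and $p_i=\frac1r\big((-ib \bmod r),\,r-i,\,i\big)$ for $i=0,\ldots,r$ (so $p_0=e_2$, $p_r=e_3$, $p_{r-a}=\frac1r(1,a,r-a)$). The Danilov resolution of the toric singularity $\frac1r(1,a,r-a)$ (cone $\langle e_1,e_2,e_3\rangle$ in $N$) is obtained by the weighted blow-up at $p_{r-a}$ followed recursively by the Danilov resolutions of the cones $\langle e_1,e_2,p_{r-a}\rangle$ and $\langle e_1,e_3,p_{r-a}\rangle$, which are toric singularities of type $\frac{1}{r-a}(1,(r \bmod (r-a)),(-r \bmod (r-a)))$ and $\frac1a(1,(-r \bmod a),(r \bmod a))$ respectively; their resolutions are called the $L$-resolution and the $R$-resolution. Let $D_k$ be the toric divisor of the ray through $p_k$ and $E_1$ the toric divisor of the ray through $e_1$. The permutation $\tau(r,a,\cdot)$ of $\{0,\ldots,r-1\}$ is defined recursively: if $a\in\{1,r-1\}$, $\tau(r,a,i)=(ai-1 \bmod r)$; otherwise $\tau(r,a,i)=\tau(r-a,(r\bmod (r-a)),(i \bmod (r-a)))$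 if $i\ge a$, and $\tau(r,a,i)=(r-a)+\tau(a,(-r \bmod a),i)$ if $i<a$. Set $Z_i=\sum_{k=\tau(r,a,i)+1}^{r}D_k$, and define divisors $X_i$ ($i=0,\ldots,r-1$, indices modulo $r$) by $X_i+Z_{i+1}=Z_i+X_{i-a}$ for all $i$ and $X_0=E_1$. The divisors $X^L_j$ (resp. $X^R_j$) on the $L$- (resp. $R$-)resolution are defined by the same construction with $(r,a)$ replaced by $(r-a,(r\bmod(r-a)))$ (resp. $(a,(-r\bmod a))$). *)

(* Defs.v *)
From HB Require Import structures.
From mathcomp Require Import all_boot all_order all_algebra.
Set Implicit Arguments. Unset Strict Implicit. Unset Printing Implicit Defensive.
Import Order.TTheory GRing.Theory Num.Theory.
Local Open Scope ring_scope.

(* Toric divisors on the Danilov resolution of 1/r(1,a,r-a): integer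
   combinations of E_1 (index None) and D_0, ..., D_r (index Some k). *)
Definition tdiv (r : nat) := {ffun option 'I_r.+1 -> int}.

Definition E1 (r : nat) : tdiv r := [ffun o => if o is None then 1 else 0].
Definition Dk (r k : nat) : tdiv r :=
  [ffun o => if o is Some j then ((val j == k) : nat)%:Z else 0].

Fixpoint tau_aux (fuel r a i : nat) : nat :=
  match fuel with
  | 0 => 0%N
  | S f =>
    if (a == 1)%N || (a == r.-1)%N then ((a * i + r.-1) %% r)%N
    else if (a <= i)%N then tau_aux f (r - a) (r %% (r - a)) (i %% (r - a))
    else ((r - a) + tau_aux f a ((a - r %% a) %% a) i)%N
  end.
Definition tau (r a i : nat) : nat := tau_aux r r a i.

Definition Zdiv (r a i : nat) : tdiv r :=
  \sum_((tau r a i).+1 <= k < r.+1) Dk r k.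

Definition IsXfamily (r a : nat) (X : nat -> tdiv r) : Prop :=
  X 0%N = E1 r /\
  forall i, (i < r)%N ->
    X i + Zdiv r a ((i.+1) %% r)%N = Zdiv r a i + X ((i + (r - a)) %% r)%N.

(* Restriction to the L-resolution (cone <e1,e2,p_{r-a}>): its rays are
   e1 and p_0..p_{r-a}; p_k corresponds to p^L_k. *)
Definition resL (r a : nat) (D : tdiv r) : tdiv (r - a)%N :=
  [ffun o => if o is Some j then D (Some (inord (val j))) else D None].

(* Restriction to the R-resolution (cone <e1,e3,p_{r-a}>): its rays are
   e1 and p_{r-a}..p_r; p_{r-a+j} corresponds to p^R_j. *)
Definition resR (r a : nat) (D : tdiv r) : tdiv a :=
  [ffun o => if o is Some j then D (Some (inord (r - a + val j)%N)) else D None].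

Arguments IsXfamily : clear implicits.
Arguments resL : clear implicits.
Arguments resR : clear implicits.
Arguments Zdiv : clear implicits.
Arguments Dk : clear implicits.
Arguments E1 : clear implicits.

(* Main.v *)
Require Import Defs.
From HB Require Import structures.
From mathcomp Require Import all_boot all_order all_algebra.
From mathcomp Require Import zify.
Set Implicit Arguments. Unset Strict Implicit.

Lemma tau_aux_bound f r a i : (0 < r)%N -> (a < r)%N -> (tau_aux f r a i < r)%N.
Proof.
elim: f r a i => [|f IH] r a i r0 ar /=; first by [].
case: ifP => _; first by rewrite ltn_mod.
case: ifP => ai.
  have := IH (r - a) (r %% (r - a)) (i %% (r - a)).
  rewrite ltn_mod; lia.
have a0 : (0 < a)%N by lia.
have := IH a ((a - r %% a) %% a) i a0.
rewrite ltn_mod a0 => /(_ isT); lia.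
Qed.

Definition good r a := [&& (0 < r)%N, (a < r)%N & coprime a r].

Lemma coprime_sub a r : (a <= r)%N -> coprime a r -> coprime (r - a) r.
Proof.
move=> ar; rewrite /coprime.
have -> : gcdn (r - a) r = gcdn a r.
  have {2}-> : r = (r - a) + a by lia.
  rewrite gcdnDl gcdnC.
  have {2}-> : r = a + (r - a) by lia.
  by rewrite gcdnDl.
by [].
Qed.

Lemma good_L r a : good r a -> (0 < a)%N -> good (r - a) (r %% (r - a)).
Proof.
case/and3P=> r0 ar co a0; apply/and3P; split; first lia.
  rewrite ltn_mod; lia.
by rewrite coprime_modl coprime_sym; apply: coprime_sub => //; apply: ltnW.
Qed.

Lemma good_R r a : good r a -> (0 < a)%N -> good a ((a - r %% a) %% a).
Proof.
case/and3P=> r0 ar co a0; apply/and3P; split => //.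
  by rewrite ltn_mod.
rewrite coprime_modl.
have h : coprime (r %% a) a by rewrite coprime_modl coprime_sym.
apply: coprime_sub h; exact: ltnW (ltn_pmod r a0).
Qed.

Lemma good_a0 r a : good r a -> (a == 1)%N || (a == r.-1)%N = false -> (0 < a)%N.
Proof.
case/and3P=> r0 ar co; case: a ar co => // ar; rewrite /coprime gcd0n => /eqP -> //.
Qed.

Lemma tau_fuel f g r a i : good r a -> (r <= f)%N -> (r <= g)%N ->
  tau_aux f r a i = tau_aux g r a i.
Proof.
elim: f g r a i => [|f IH] g r a i gd rf rg.
  by move: gd rf => /and3P[r0 _ _]; lia.
case: g rg => [|g] rg; first by move: gd => /and3P[r0 _ _]; lia.
rewrite /=; case: ifP => nb //.
have a0 := good_a0 gd nb.
move: (gd) => /and3P[r0 ar co].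
case: ifP => ai.
  apply: IH; [exact: good_L|lia|lia].
congr (_ + _)%N; apply: IH; [exact: good_R|lia|lia].
Qed.

Lemma modA1 r i : (1 <= i < r)%N -> ((1 * i + r.-1) %% r = i.-1)%N.
Proof.
move=> h; have -> : (1 * i + r.-1 = r + i.-1)%N by lia.
by rewrite modnDl modn_small //; lia.
Qed.

Lemma modA2 m i : (i < m)%N -> (((m.-1) * i + m.-1) %% m = m.-1 - i)%N.
Proof.
move=> h; have -> : ((m.-1) * i + m.-1 = i * m + (m.-1 - i))%N.
  case: m h => // m h /=; nia.
by rewrite modnMDl modn_small //; lia.
Qed.

Lemma tau_base m a j : (0 < m)%N -> (a == 1)%N || (a == m.-1)%N ->
  tau m a j = ((a * j + m.-1) %% m)%N.
Proof. by case: m => // m _ h; rewrite /tau /= h. Qed.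

Lemma tau_step r a i : (0 < r)%N -> (a == 1)%N || (a == r.-1)%N = false ->
  tau r a i = if (a <= i)%N then tau_aux r.-1 (r - a) (r %% (r - a)) (i %% (r - a))
              else ((r - a) + tau_aux r.-1 a ((a - r %% a) %% a) i)%N.
Proof. by case: r => // r _ h; rewrite /tau /= h. Qed.

Lemma mod_rm1 r : (2 < r)%N -> (r %% r.-1 = 1)%N.
Proof.
move=> h; have {1}-> : r = (r.-1 + 1)%N by lia.
rewrite modnDl modn_small //; lia.
Qed.

Lemma tau_L r a i : good r a -> (0 < a)%N -> (a <= i < r)%N ->
  tau r a i = tau (r - a) (r %% (r - a)) (i %% (r - a)).
Proof.
move=> gd a0 /andP[ai ir]; move: (gd) => /and3P[r0 ar co].
case nb: ((a == 1)%N || (a == r.-1)%N); last first.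
  rewrite tau_step ?nb // ai; apply: tau_fuel; [exact: good_L|lia|lia].
rewrite tau_base //.
case/orP: nb => /eqP ea; subst a.
  rewrite modA1 ?ai //.
  case: (ltngtP r 2) => hr; first lia.
    have e : (r - 1 = r.-1)%N by lia.
    rewrite e mod_rm1 // tau_base; [|lia|by []].
    case: (ltngtP i r.-1) => hi; last first.
      - by rewrite hi modnn mul1n add0n modn_small; lia.
      - lia.
    by rewrite (modn_small hi) modA1; lia.
  subst r. have -> : i = 1%N by lia. by [].
have ei : i = r.-1 by lia.
subst i. rewrite modA2 // subnn.
have -> : (r - r.-1 = 1)%N by lia.
by rewrite !modn1.
Qed.

Lemma tau_R r a i : good r a -> (0 < a)%N -> (i < a)%N ->
  tau r a i = ((r - a) + tau a ((a - r %% a) %% a) i)%N.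
Proof.
move=> gd a0 ia; move: (gd) => /and3P[r0 ar co].
case nb: ((a == 1)%N || (a == r.-1)%N); last first.
  rewrite tau_step ?nb // leqNgt ia /=; congr (_ + _)%N.
  apply: tau_fuel; [exact: good_R|lia|lia].
rewrite tau_base //.
case: (boolP (a == 1%N)) => [/eqP ea|na].
  subst a. have -> : i = 0%N by lia.
  rewrite !modn1 muln0 add0n modn_small; last lia.
  have -> : tau 1 0 0 = 0%N by []. lia.
move: nb; rewrite (negbTE na) /= => /eqP ea; subst a.
have r3 : (2 < r)%N by lia.
rewrite modA2; last lia.
rewrite mod_rm1 //.
have -> : ((r.-1 - 1) %% r.-1 = r.-1.-1)%N by rewrite modn_small; lia.
rewrite tau_base; [|lia|by rewrite eqxx orbT].
rewrite modA2; lia.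
Qed.

Lemma inj_mulmod r c t t' : coprime c r -> (t < r)%N -> (t' < r)%N ->
  ((t * c) %% r = (t' * c) %% r)%N -> t = t'.
Proof.
move=> co.
wlog le : t t' / (t <= t')%N.
  move=> W ht ht' e; case: (leqP t t') => h; first exact: W.
  by symmetry; apply: W => //; apply: ltnW.
move=> ht ht' e.
have : (r %| t' - t)%N.
  rewrite -(@Gauss_dvdl r (t' - t) c); last by rewrite coprime_sym.
  by rewrite mulnBl -eqn_mod_dvd ?leq_mul2r ?le ?orbT // e.
case: (posnP (t' - t)) => [h|h /(dvdn_leq h)]; lia.
Qed.

Lemma surj_mulmod r c x : coprime c r -> (x < r)%N ->
  exists2 t, (t < r)%N & ((t * c) %% r)%N = x.
Proof.
move=> co xr.
have r0 : (0 < r)%N by lia.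
pose F (t : 'I_r) : 'I_r := Ordinal (ltn_pmod (t * c) r0).
have Finj : injective F.
  move=> t t' /(congr1 val) /= e; apply: val_inj => /=.
  exact: inj_mulmod co (ltn_ord t) (ltn_ord t') e.
have := injF_onto Finj (Ordinal xr).
case/codomP => t /(congr1 val) /= e.
by exists t.
Qed.

Lemma chain (T : Type) r c (f : nat -> T) : (1 < r)%N -> coprime c r ->
  (forall i, (i <= r - 2)%N -> ((i + c) %% r <= r - 2)%N -> f ((i + c) %% r) = f i) ->
  forall i, (i <= r - 2)%N -> f i = f 0.
Proof.
move=> r1 co step i ir.
have r0 : (0 < r)%N by lia.
have [s0 s0r es0] := @surj_mulmod r c (r.-1) co (ltac:(lia) : (r.-1 < r)%N).
have [t tr et] := @surj_mulmod r c i co (ltac:(lia) : (i < r)%N).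
have ne (u : nat) : (u < r)%N -> u <> s0 -> ((u * c) %% r <= r - 2)%N.
  move=> ur us.
  have : ((u * c) %% r < r)%N by rewrite ltn_mod.
  have : ((u * c) %% r <> r.-1)%N by move=> e; apply: us; apply: inj_mulmod co ur s0r _; rewrite e es0.
  lia.
have edge (u : nat) : f ((u.+1 * c) %% r) = f ((u * c) %% r) ->
  f ((u.+1 * c) %% r) = f ((u * c) %% r) by [].
have stepu (u : nat) : (u < r)%N -> u <> s0 -> ((u.+1 * c) %% r <= r - 2)%N ->
   f ((u.+1 * c) %% r) = f ((u * c) %% r).
  move=> ur us h.
  have e : ((u.+1 * c) %% r = ((u * c) %% r + c) %% r)%N by rewrite modnDml mulSn addnC.
  rewrite e; apply: step; [exact: ne ur us| by rewrite -e].
have fwd : forall u, (u < s0)%N -> f ((u * c) %% r) = f 0.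
  elim=> [|u IH] h; first by rewrite mul0n mod0n.
  rewrite stepu; [apply: IH; lia|lia|lia|apply: ne; lia].
have bwd : forall k, (k < r - s0)%N -> f (((r - k) * c) %% r) = f 0.
  elim=> [|k IH] h.
    by rewrite subn0 modnMr.
  have e : (r - k = (r - k.+1).+1)%N by lia.
  rewrite -stepu -?e; [apply: IH; lia|lia|lia|].
  case: k {IH} h e => [|k] h e.
    by rewrite subn0 modnMr; lia.
  apply: ne; lia.
rewrite -et.
case: (ltngtP t s0) => hts.
- exact: fwd.
- have -> : t = (r - (r - t))%N by lia.
  apply: bwd; lia.
- by exfalso; move: et; rewrite hts es0; lia.
Qed.

Lemma M1 a b i : (0 < b)%N -> (a <= i)%N ->
  ((i %% b + (b - (a + b) %% b)) %% b = (i - a) %% b)%N.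
Proof.
move=> b0 ai; rewrite modnDml modnDr.
have ha := divn_eq a b.
have hc : (a %% b < b)%N by rewrite ltn_mod.
have -> : (i + (b - a %% b) = (a %/ b * b) + ((i - a) + b))%N by lia.
by rewrite modnMDl modnDr.
Qed.

Lemma M2 a r i : (1 < a)%N -> (a < r)%N -> coprime a r ->
  ((i + (a - (a - r %% a) %% a)) %% a = (i + (r - a)) %% a)%N.
Proof.
move=> a1 ar co.
have nz : (r %% a != 0)%N.
  apply/eqP=> e; move: co; rewrite coprime_sym -coprime_modl e /coprime gcd0n; lia.
have hc : (r %% a < a)%N by rewrite ltn_mod; lia.
rewrite (@modn_small (a - r %% a)); last lia.
have -> : (a - (a - r %% a) = r %% a)%N by lia.
rewrite modnDmr.
have e : (i + r = (i + (r - a)) + a)%N by lia.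
by rewrite e modnDr.
Qed.

Import GRing.Theory.
Local Open Scope ring_scope.

Lemma sum_ind (m n j : nat) :
  \sum_(m <= k < n) (((j == k)%N : nat)%:Z) = (((m <= j) && (j < n))%N : nat)%:Z.
Proof.
elim: n => [|n IH]; first by rewrite big_geq // ltn0 andbF.
case: (leqP m n) => hmn.
  rewrite big_nat_recr //= IH.
  case: (ltngtP j n) => hj.
  - by rewrite (ltn_trans hj (ltnSn n)) andbT addr0.
  - have -> : (j < n.+1)%N = false by apply/negbTE; rewrite -leqNgt.
    by rewrite andbF addr0.
  - by rewrite hj ltnSn hmn andbF add0r.
rewrite big_geq //.
have -> : ((m <= j) && (j < n.+1))%N = false; last by [].
apply/negbTE; rewrite negb_and -!ltnNge; lia.
Qed.

Lemma Zdiv_None r a i : Zdiv r a i None = 0.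
Proof. by rewrite /Zdiv sum_ffunE big1 // => k _; rewrite ffunE. Qed.

Lemma Zdiv_Some r a i (k : 'I_r.+1) :
  Zdiv r a i (Some k) = ((tau r a i < k)%N : nat)%:Z.
Proof.
rewrite /Zdiv sum_ffunE.
under eq_bigr => j _ do rewrite ffunE.
by rewrite sum_ind ltn_ord andbT.
Qed.

Lemma E1_None r : E1 r None = 1. Proof. by rewrite ffunE. Qed.
Lemma E1_Some r k : E1 r (Some k) = 0. Proof. by rewrite ffunE. Qed.

Lemma resL_Z_ge r a i : good r a -> (0 < a)%N -> (a <= i < r)%N ->
  resL r a (Zdiv r a i) = Zdiv (r - a) (r %% (r - a)) (i %% (r - a)).
Proof.
move=> gd a0 h; move: (gd) => /and3P[r0 ar co].
apply/ffunP => [[[j hj]|]]; rewrite !ffunE ?Zdiv_None // !Zdiv_Some /=.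
rewrite inordK; last by lia.
by rewrite (tau_L gd a0 h).
Qed.

Lemma resL_Z_lt r a i : good r a -> (0 < a)%N -> (i < a)%N ->
  resL r a (Zdiv r a i) = 0.
Proof.
move=> gd a0 h; move: (gd) => /and3P[r0 ar co].
apply/ffunP => [[[j hj]|]]; rewrite !ffunE ?Zdiv_None // !Zdiv_Some /=.
rewrite inordK; last by lia.
rewrite (tau_R gd a0 h).
have -> : (r - a + tau a ((a - r %% a) %% a) i < j)%N = false; last by [].
apply/negbTE; rewrite -leqNgt; lia.
Qed.

Lemma resR_Z_lt r a i : good r a -> (0 < a)%N -> (i < a)%N ->
  resR r a (Zdiv r a i) = Zdiv a ((a - r %% a) %% a) i.
Proof.
move=> gd a0 h; move: (gd) => /and3P[r0 ar co].
apply/ffunP => [[[j hj]|]]; rewrite !ffunE ?Zdiv_None // !Zdiv_Some /=.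
rewrite inordK; last by lia.
by rewrite (tau_R gd a0 h) ltn_add2l.
Qed.

Definition fullR a : tdiv a := [ffun o => if o is Some _ then 1 else 0].

Lemma resR_Z_ge r a i : good r a -> (0 < a)%N -> (a <= i < r)%N ->
  resR r a (Zdiv r a i) = fullR a.
Proof.
move=> gd a0 h; move: (gd) => /and3P[r0 ar co].
apply/ffunP => [[[j hj]|]]; rewrite !ffunE ?Zdiv_None // !Zdiv_Some /=.
rewrite inordK; last by lia.
rewrite (tau_L gd a0 h) /tau.
have := @tau_aux_bound (r - a) (r - a) (r %% (r - a)) (i %% (r - a)).
rewrite ltn_mod.
have hb : (0 < r - a)%N by lia.
move=> /(_ hb hb) hh.
have -> : (tau_aux (r - a) (r - a) (r %% (r - a)) (i %% (r - a)) < r - a + j)%N; last by [].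
lia.
Qed.

Lemma resL_add r a (x y : tdiv r) : resL r a (x + y) = resL r a x + resL r a y.
Proof. by apply/ffunP => [[j|]]; rewrite !ffunE. Qed.
Lemma resR_add r a (x y : tdiv r) : resR r a (x + y) = resR r a x + resR r a y.
Proof. by apply/ffunP => [[j|]]; rewrite !ffunE. Qed.
Lemma resL_E1 r a : resL r a (E1 r) = E1 (r - a).
Proof. by apply/ffunP => [[j|]]; rewrite !ffunE. Qed.
Lemma resR_E1 r a : resR r a (E1 r) = E1 a.
Proof. by apply/ffunP => [[j|]]; rewrite !ffunE. Qed.

Lemma zhelp n (A B C D A' B' : tdiv n) :
  A + C = D + B -> A' + C = D + B' -> B - B' = A - A'.
Proof.
move=> h1 h2; apply/ffunP => o.
move/ffunP: h1 => /(_ o); move/ffunP: h2 => /(_ o).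
rewrite !ffunE; move: (A o) (B o) (C o) (D o) (A' o) (B' o) => x1 x2 x3 x4 x5 x6 h1 h2. lia.
Qed.

Theorem mainTheorem4 (r a : nat) :
  (0 < a)%N -> (a < r)%N -> coprime a r ->
  forall (X : nat -> tdiv r) (XL : nat -> tdiv (r - a)) (XR : nat -> tdiv a),
    IsXfamily r a X ->
    IsXfamily (r - a) (r %% (r - a)) XL ->
    IsXfamily a ((a - r %% a) %% a) XR ->
    forall i, (i <= r - 2)%N ->
      resL r a (X i) = XL (i %% (r - a))%N /\ resR r a (X i) = XR (i %% a)%N.
Proof.
move=> a0 ar co X XL XR [X0 HX] [XL0 HXL] [XR0 HXR] i ir.
have gd : good r a by apply/and3P; split => //; lia.
have r1 : (1 < r)%N by lia.
have cob : coprime (r - a) r by apply: coprime_sub => //; apply: ltnW.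
have b0 : (0 < r - a)%N by lia.
have HXi j : (j <= r - 2)%N ->
    X j + Zdiv r a j.+1 = Zdiv r a j + X ((j + (r - a)) %% r)%N.
  by move=> hj; rewrite -(@modn_small j.+1 r); [apply: HX|]; lia.
split.
- apply/eqP; rewrite -subr_eq0; apply/eqP.
  pose f := fun i => resL r a (X i) - XL (i %% (r - a))%N.
  change (f i = 0).
  have -> : f i = f 0%N; last by rewrite /f X0 resL_E1 mod0n XL0 subrr.
  apply: (@chain _ r (r - a) f r1 cob _ i ir).
  move=> j hj hp; rewrite /f.
  have HXj := HXi j hj.
  case: (leqP a j) => aj.
    have ep : ((j + (r - a)) %% r = j - a)%N.
      have -> : (j + (r - a) = r + (j - a))%N by lia.
      by rewrite modnDl modn_small; lia.
    rewrite ep; rewrite ep in HXj.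
    move/(congr1 (resL r a)): HXj; rewrite !resL_add !resL_Z_ge //; try lia.
    have := HXL (j %% (r - a))%N (ltn_pmod _ b0).
    have m1 := @M1 a (r - a) j b0 aj; rewrite subnKC in m1; last by apply: ltnW.
    rewrite (_ : ((j %% (r - a)).+1 %% (r - a) = j.+1 %% (r - a))%N); last first.
      by rewrite -[(j %% (r - a)).+1]addn1 -[j.+1]addn1 modnDml.
    rewrite m1.
    move=> h1 h2; apply: zhelp h2 h1.
  have ep : ((j + (r - a)) %% r = j + (r - a))%N by rewrite modn_small; lia.
  rewrite ep; rewrite ep in HXj.
  move/(congr1 (resL r a)): HXj; rewrite !resL_add !resL_Z_lt //; try lia.
  rewrite addr0 add0r => ->.
  by rewrite modnDr.
- apply/eqP; rewrite -subr_eq0; apply/eqP.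
  pose f := fun i => resR r a (X i) - XR (i %% a)%N.
  change (f i = 0).
  have -> : f i = f 0%N; last by rewrite /f X0 resR_E1 mod0n XR0 subrr.
  apply: (@chain _ r (r - a) f r1 cob _ i ir).
  move=> j hj hp; rewrite /f.
  have HXj := HXi j hj.
  case: (leqP a j) => aj.
    have ep : ((j + (r - a)) %% r = j - a)%N.
      have -> : (j + (r - a) = r + (j - a))%N by lia.
      by rewrite modnDl modn_small; lia.
    rewrite ep; rewrite ep in HXj.
    move/(congr1 (resR r a)): HXj; rewrite !resR_add !resR_Z_ge //; try lia.
    rewrite addrC => /addrI ->.
    by congr (_ - XR _); rewrite -{2}(subnK aj) modnDr.
  have ep : ((j + (r - a)) %% r = j + (r - a))%N by rewrite modn_small; lia.
  rewrite ep; rewrite ep in HXj.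
  have a1 : (1 < a)%N by lia.
  move/(congr1 (resR r a)): HXj; rewrite !resR_add !resR_Z_lt //; try lia.
  have := HXR j aj.
  rewrite (@modn_small j.+1 a); last lia.
  rewrite M2 // (@modn_small j a) //.
  move=> h1 h2; apply: zhelp h2 h1.
Qed.
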